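(* Let $K$ be a strength measure. Then for every bipartite Hamiltonian $H$, $K(H)\ge0$, with $K(H)=0$ if and only if $H$ is local.
   Context: All Hamiltonians are Hermitian operators on finite-dimensional Hilbert spaces. A bipartite Hamiltonian acts on $\mathcal H_A\otimes\mathcal H_B$, with system $A$ held by Alice and $B$ by Bob; it is local if it has the form $H_A\otimes I_B+I_A\otimes H_B$ and nonlocal otherwise. Simulation model: Alice and Bob may attach local ancillas, apply arbitrary instantaneous local unitaries, and switch $H$ on for chosen times, to track (stroboscopically, for arbitrarily fine times) the evolution $e^{-iH't}$; the simulation rate $\gamma_{H'|H}$ is the supremum of $\gamma\ge0$ such that evolution under $H'$ for time $t$ is achievable using $H$ for total time $t/\gamma$. Local Hamiltonians can be produced at no cost (so $\gamma_{H_0|H}=\infty$ for local $H_0$), a local Hamiltonian cannot simulate a nonlocal one ($\gamma_{H|H_0}=0$), and (known fact) every nonlocal bipartite Hamiltonian can simulate every bounded bipartite Hamiltonian at a strictly positive rate. A strength measure is a function $K$ from bipartite Hamiltonians (on arbitrary finite dimensions) to $\mathbb R\cup\{\pm\infty\}$ that is finite on every Hamiltonian, not identically zero, and satisfies the monotonicity axiom $K(H)\ge\gamma_{H'|H}K(H')$ for all $H,H'$. *)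

(* Defs.v *)
From HB Require Import structures.
From mathcomp Require Import all_boot all_order all_algebra.
From mathcomp Require Import sesquilinear.
From mathcomp Require Import complex mxtens.
From mathcomp Require Import constructive_ereal Rstruct.
From Stdlib Require Import Rdefinitions.

Set Implicit Arguments.
Unset Strict Implicit.
Unset Printing Implicit Defensive.

Import Order.TTheory GRing.Theory Num.Theory.
Local Open Scope ring_scope.

Definition CC : numClosedFieldType := (Rdefinitions.R)[i].

(** A bipartite Hamiltonian: a Hermitian operator on
    H_A (x) H_B, with dim H_A = dA.+1 >= 1 and dim H_B = dB.+1 >= 1.
    Matrices on H_A (x) H_B are indexed via mxtens (Kronecker product
    [A *t B]). *)
Record bham := BHam {
  dimA : nat;
  dimB : nat;
  hmat : 'M[CC]_(dimA.+1 * dimB.+1);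
  hmat_herm : hmat \is hermsymmx
}.

Definition is_local (H : bham) : Prop :=
  exists (HA : 'M[CC]_((dimA H).+1)) (HB : 'M[CC]_((dimB H).+1)),
    HA \is hermsymmx /\ HB \is hermsymmx /\
    hmat H = HA *t 1%:M + 1%:M *t HB.

(** Abstract simulation-rate function: [rate H' H] is gamma_{H'|H},
    the rate at which H simulates H'.  Values in [0, +oo].  The facts
    stated in the paper's context are imposed as hypotheses. *)
Definition rate_function := bham -> bham -> \bar (Rdefinitions.R).

Definition rate_axioms (rate : rate_function) : Prop :=
  [/\ (forall H' H, (0 <= rate H' H)%E),
      (forall H0 H, is_local H0 -> rate H0 H = +oo%E),
      (forall H H0, is_local H0 -> ~ is_local H -> rate H H0 = 0%E) &
      (forall H' H, ~ is_local H -> (0 < rate H' H)%E)].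

(** Strength measure: K is finite on every Hamiltonian (hence real
    valued), not identically zero, and monotone:
    K(H) >= gamma_{H'|H} K(H')  (product in the extended reals,
    with the standard convention +oo * 0 = 0). *)
Definition strength_measure (rate : rate_function)
    (K : bham -> Rdefinitions.R) : Prop :=
  (exists H, K H != 0) /\
  (forall H H', (rate H' H * (K H')%:E <= (K H)%:E)%E).

(* Main.v *)
Require Import Defs.
From HB Require Import structures.
From mathcomp Require Import all_boot all_order all_algebra.
From mathcomp Require Import sesquilinear complex mxtens.
From mathcomp Require Import constructive_ereal Rstruct.
From Stdlib Require Import Rdefinitions.
From mathcomp Require Import ring.
Import Order.TTheory GRing.Theory Num.Theory.
Local Open Scope ring_scope.

Lemma zero_herm n : (0 : 'M[CC]_n) \is hermsymmx.
Proof. by apply/is_hermitianmxP; apply/matrixP=> i j; rewrite !mxE /= conjC0 mulr0. Qed.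

Definition k11 : 'I_(2 * 2) := mxtens_index ((1 : 'I_2), (1 : 'I_2)).

Lemma delta_herm : (delta_mx k11 k11 : 'M[CC]_(2 * 2)) \is hermsymmx.
Proof.
apply/is_hermitianmxP; apply/matrixP=> i j; rewrite !mxE /= expr0 mul1r.
by case: (i == k11); case: (j == k11); rewrite /= ?conjC0 ?conjC1.
Qed.

Definition Z0 := BHam (zero_herm (0.+1 * 0.+1)).
Definition N1 := @BHam 1 1 _ delta_herm.

Lemma Z0_local : is_local Z0.
Proof.
exists 0, 0; split; first exact: zero_herm; split; first exact: zero_herm.
by rewrite /= tens0mx tensmx0 addr0.
Qed.

Lemma N1_nonlocal : ~ is_local N1.
Proof.
case=> HA [HB [_ [_ /= E]]].
have e i j : (delta_mx k11 k11 : 'M[CC]_(2*2)) (mxtens_index (i, j)) (mxtens_index (i, j))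
   = HA i i + HB j j.
  by rewrite E mxE !tensmxE !mxE !eqxx !mulr1 !mul1r.
have e00 := e 0 0; have e01 := e 0 1; have e10 := e 1 0; have e11 := e 1 1.
rewrite !mxE /= in e00 e01 e10 e11.
have : (1 : CC) = 0.
  apply: (etrans e11).
  have -> : HA 1 1 + HB 1 1 = (HA 1 1 + HB 0 0) + (HA 0 0 + HB 1 1) - (HA 0 0 + HB 0 0) by ring.
  by rewrite -e00 -e01 -e10 !addr0 subr0.
by move/eqP; rewrite oner_eq0.
Qed.

Section Main.
Variables (rate : rate_function) (Hrate : rate_axioms rate)
    (K : bham -> Rdefinitions.R) (HK : strength_measure rate K).

Lemma local_le0 L : is_local L -> K L <= 0.
Proof.
move=> hL; have [_ hy _ _] := Hrate; have [_ hm] := HK.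
have := hm L L; rewrite (hy L L hL) => h.
rewrite leNgt; apply/negP=> hp; move: h.
by rewrite mulyr gtr0_sg // mul1e leye_eq.
Qed.

Lemma local_ge0 L : is_local L -> 0 <= K L.
Proof.
move=> hL; have [_ _ h0 _] := Hrate; have [_ hm] := HK.
by have := hm L N1; rewrite (h0 N1 L hL N1_nonlocal) mul0e lee_fin.
Qed.

Lemma local_eq0 L : is_local L -> K L = 0.
Proof. by move=> hL; apply/eqP; rewrite eq_le local_le0 // local_ge0. Qed.

Lemma all_ge0 H : 0 <= K H.
Proof.
have [hL|hN] := Classical_Prop.classic (is_local H); first exact: local_ge0.
have [_ hy _ _] := Hrate; have [_ hm] := HK.
by have := hm H Z0; rewrite (hy Z0 H Z0_local) (@local_eq0 Z0 Z0_local) mule0 lee_fin.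
Qed.

End Main.

Theorem mainTheorem11 (rate : rate_function) (Hrate : rate_axioms rate)
    (K : bham -> Rdefinitions.R) (HK : strength_measure rate K) :
  forall H : bham, 0 <= K H /\ (K H = 0 <-> is_local H).
Proof.
move=> H; split; first exact: (@all_ge0 rate Hrate K HK _).
split; last exact: (@local_eq0 rate Hrate K HK H).
move=> H0; have [//|hN] := Classical_Prop.classic (is_local H).
exfalso; case: (HK) => [[H1 hH1] hm]; case: (Hrate) => _ _ _ hp.
have := hm H H1; rewrite H0 pmule_rle0 ?hp // lee_fin => h.
by move: hH1; rewrite eq_le h (@all_ge0 rate Hrate K HK _).
Qed.
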